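(* In the single-block Spice setting, fix $t>0$ and run iterations $k=0,1,\dots,t$ with a constant scaling factor $\rho=\rho(t)>0$, where for every $k=1,\dots,t$ $$\eta_k\ \ge\ \max\Big\{\eta_{k-1}\sqrt{\tfrac{\mathsf{R}(x^k)}{\mathsf{R}(x^{k-1})}},\ \ \eta_{k-1}\,\tfrac{\mathsf{R}(\bar x^k)\sqrt{\mathsf{R}(x^{k-1})}}{\mathsf{R}(\bar x^{k-1})\sqrt{\mathsf{R}(x^k)}}\Big\}.$$ Define $\bar x_t=\frac{1}{t+1}\sum_{k=0}^t\bar x^k$, $\eta_t^{\mathrm{avg}}=\frac{t+1}{\sum_{k=0}^t 1/\eta_k}$ and $\bar w_t=\frac{\sum_{k=0}^t\bar w^k/\eta_k}{\sum_{k=0}^t1/\eta_k}$. Then $\bar w_t\in\Omega$ and for every $w^*=(x^*,\lambda^* )\in\Omega$, $$f(\bar x_t)-f(x^* )+(\bar w_t-w^* )^\top\frac{1}{\eta_t^{\mathrm{avg}}\rho(t)}\Gamma(w^* )\ \le\ \frac{1}{2\eta_0\rho(t)(t+1)}\|w^*-w^0\|_{\mathsf{H}_0}^2,$$ where $\mathsf{H}_0=\begin{pmatrix}\sqrt{\mathsf{R}(x^0)}\,I_n&0\\0&\frac{\mu\mathsf{R}(\bar x^0)}{\sqrt{\mathsf{R}(x^0)}}I_p\end{pmatrix}$ (so that $H_0=\frac{1}{\eta_0}\mathsf{H}_0$).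
   Context: Single-block Spice setting. Let $\mathcal{X}\subseteq\mathbb{R}^n$ be nonempty closed convex, $f:\mathbb{R}^n\to\mathbb{R}$ convex, $\phi_1,\dots,\phi_p:\mathbb{R}^n\to\mathbb{R}$ convex and continuously differentiable, $\Phi(x)=(\phi_1(x),\dots,\phi_p(x))^\top$, $\mathcal{D}\Phi(x)\in\mathbb{R}^{p\times n}$ its Jacobian. Let $\mathcal{Z}=\mathbb{R}^p_+$, $\Omega=\mathcal{X}\times\mathcal{Z}$, $w=(x,\lambda)$, $\Gamma(w)=(\mathcal{D}\Phi(x)^\top\lambda,\,-\Phi(x))$. For a symmetric matrix $A$, $\|v\|_A^2:=v^\top A v$; the norm of a matrix is the spectral norm; $\mathsf{R}(x):=\|\mathcal{D}\Phi(x)\|^2$. The scaled Lagrangian is $\mathcal{L}(x,\lambda,\rho,\eta)=\rho f(x)+\frac1\eta\lambda^\top\Phi(x)$. Fix $\rho>0$, $\mu>1$, a starting point $w^0=(x^0,\lambda^0)\in\Omega$ and positive numbers $\eta_0,\eta_1,\dots$. Given $w^k=(x^k,\lambda^k)\in\Omega$, iteration $k$ is: $r_k=\frac{1}{\eta_k}\sqrt{\mathsf{R}(x^k)}$; $\bar x^k=\arg\min_{x\in\mathcal{X}}\{\mathcal{L}(x,\lambda^k,\rho,\eta_k)+\frac{r_k}{2}\|x-x^k\|^2\}$; $s_k=\frac{\mu\,\mathsf{R}(\bar x^k)}{\eta_k\sqrt{\mathsf{R}(x^k)}}$; $\bar\lambda^k=\arg\max_{\lambda\in\mathcal{Z}}\{\mathcal{L}(\bar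 x^k,\lambda,\rho,\eta_k)-\frac{s_k}{2}\|\lambda-\lambda^k\|^2\}$ (equivalently $\bar\lambda^k=\max\{\lambda^k+\frac{1}{\eta_k s_k}\Phi(\bar x^k),0\}$ componentwise); $\bar w^k=(\bar x^k,\bar\lambda^k)$; and $w^{k+1}=w^k-M_k(w^k-\bar w^k)$ where $M_k=\begin{pmatrix}I_n & -\frac{1}{\eta_k r_k}\mathcal{D}\Phi(\bar x^k)^\top\\ 0 & I_p\end{pmatrix}$. It is assumed throughout that $\mathsf{R}(x^k)>0$ and $\mathsf{R}(\bar x^k)>0$ for all $k$. Define $Q_k=\begin{pmatrix} r_kI_n & -\frac{1}{\eta_k}\mathcal{D}\Phi(\bar x^k)^\top\\ 0 & s_kI_p\end{pmatrix}$, $H_k=\begin{pmatrix} r_kI_n&0\\0&s_kI_p\end{pmatrix}$, $G_k=\begin{pmatrix} r_kI_n&0\\0&s_kI_p-\frac{1}{\eta_k^2r_k}\mathcal{D}\Phi(\bar x^k)\mathcal{D}\Phi(\bar x^k)^\top\end{pmatrix}$. *)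

(* Defs.v *)
(* Vectors of R^n are represented as row vectors 'rV[R]_n (the convention
   of MathComp-Analysis' [jacobian]); a pair w = (x, lambda) is [row_mx x lambda]. *)
From HB Require Import structures.
From mathcomp Require Import all_boot all_order all_algebra.
From mathcomp Require Import all_classical all_reals all_analysis.
Set Implicit Arguments. Unset Strict Implicit. Unset Printing Implicit Defensive.
Import Order.TTheory GRing.Theory Num.Theory.
Import numFieldNormedType.Exports.
Local Open Scope classical_set_scope.
Local Open Scope ring_scope.

Section SpiceDefs.
Variable R : realType.

Definition dotv k (u v : 'rV[R]_k) : R := \sum_(i < k) u 0 i * v 0 i.
Definition enorm k (v : 'rV[R]_k) : R := Num.sqrt (dotv v v).

Definition qnorm2 k (A : 'M[R]_k) (v : 'rV[R]_k) : R := (v *m A *m v^T) 0 0.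

Definition specnorm p n (A : 'M[R]_(p, n)) : R :=
  sup [set enorm (u *m A^T) | u in [set u : 'rV[R]_n | enorm u <= 1]].

Definition convex_fun n (g : 'rV[R]_n -> R) : Prop :=
  forall x y (a : R), 0 <= a <= 1 ->
    g (a *: x + (1 - a) *: y) <= a * g x + (1 - a) * g y.

(* Jacobian D Phi(x) in R^{p x n}  (row i = gradient of phi_i);
   MathComp's [jacobian] uses the transposed (row-vector) convention. *)
Definition Jac n p (Phi : 'rV[R]_n -> 'rV[R]_p) (x : 'rV[R]_n) : 'M[R]_(p, n) :=
  (jacobian Phi x)^T.

Definition RR n p (Phi : 'rV[R]_n -> 'rV[R]_p) (x : 'rV[R]_n) : R :=
  specnorm (Jac Phi x) ^+ 2.

Definition nonneg p (l : 'rV[R]_p) : Prop := forall i, 0 <= l 0 i.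

Definition inOmega n p (X : set 'rV[R]_n) (w : 'rV[R]_(n + p)) : Prop :=
  X (lsubmx w) /\ nonneg (rsubmx w).

Definition Lag n p (f : 'rV[R]_n -> R) (Phi : 'rV[R]_n -> 'rV[R]_p)
  (x : 'rV[R]_n) (l : 'rV[R]_p) (rho eta : R) : R :=
  rho * f x + eta^-1 * dotv l (Phi x).

Definition Gamma n p (Phi : 'rV[R]_n -> 'rV[R]_p) (w : 'rV[R]_(n + p)) : 'rV[R]_(n + p) :=
  row_mx (rsubmx w *m Jac Phi (lsubmx w)) (- Phi (lsubmx w)).

(* M_k = [[I_n, -(1/(eta r)) DPhi(xbar)^T], [0, I_p]]  (acting on column vectors) *)
Definition Mmat n p (Phi : 'rV[R]_n -> 'rV[R]_p) (eta r : R) (xb : 'rV[R]_n)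
  : 'M[R]_(n + p) :=
  block_mx 1%:M (- ((eta * r)^-1 *: (Jac Phi xb)^T)) 0 1%:M.

Definition H0mat n p (Phi : 'rV[R]_n -> 'rV[R]_p) (mu : R) (x0 xb0 : 'rV[R]_n)
  : 'M[R]_(n + p) :=
  block_mx ((Num.sqrt (RR Phi x0))%:M) 0 0
           ((mu * RR Phi xb0 / Num.sqrt (RR Phi x0))%:M).

Definition spice_step n p (X : set 'rV[R]_n) (f : 'rV[R]_n -> R)
  (Phi : 'rV[R]_n -> 'rV[R]_p) (rho mu eta : R)
  (xk : 'rV[R]_n) (lk : 'rV[R]_p) (xbk : 'rV[R]_n) (lbk : 'rV[R]_p)
  (xk1 : 'rV[R]_n) (lk1 : 'rV[R]_p) : Prop :=
  let rk := eta^-1 * Num.sqrt (RR Phi xk) in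
  let sk := mu * RR Phi xbk / (eta * Num.sqrt (RR Phi xk)) in
  [/\ X xbk,
      (forall x, X x ->
         Lag f Phi xbk lk rho eta + rk / 2 * enorm (xbk - xk) ^+ 2
         <= Lag f Phi x lk rho eta + rk / 2 * enorm (x - xk) ^+ 2),
      nonneg lbk,
      (forall l, nonneg l ->
         Lag f Phi xbk l rho eta - sk / 2 * enorm (l - lk) ^+ 2
         <= Lag f Phi xbk lbk rho eta - sk / 2 * enorm (lbk - lk) ^+ 2) &
      (* w^{k+1} = w^k - M_k (w^k - wbar^k), written for row vectors *)
      row_mx xk1 lk1 =
        row_mx xk lk - (row_mx xk lk - row_mx xbk lbk) *m (Mmat Phi eta rk xbk)^T].

End SpiceDefs.

(* Main.v *)
Set Warnings "-notation-overridden,-ambiguous-paths,-notation-incompatible-prefix".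
Require Import Defs.
From HB Require Import structures.
From mathcomp Require Import all_boot all_order all_algebra.
From mathcomp Require Import all_classical all_reals all_analysis.
From mathcomp Require Import ring lra.
Import Order.TTheory GRing.Theory Num.Theory.
Import numFieldNormedType.Exports.
Local Open Scope classical_set_scope.
Local Open Scope ring_scope.
Set Implicit Arguments. Unset Strict Implicit. Unset Printing Implicit Defensive.
Section Dot.
Variable R : realType.
Implicit Types (k : nat).

Lemma dotvC k (u v : 'rV[R]_k) : dotv u v = dotv v u.
Proof. by apply: eq_bigr => i _; rewrite mulrC. Qed.

Lemma dotvDl k (u v w : 'rV[R]_k) : dotv (u + v) w = dotv u w + dotv v w.
Proof. by rewrite /dotv -big_split; apply: eq_bigr => i _; rewrite mxE mulrDl. Qed.

Lemma dotvZl k a (u w : 'rV[R]_k) : dotv (a *: u) w = a * dotv u w.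
Proof. by rewrite /dotv mulr_sumr; apply: eq_bigr => i _; rewrite mxE mulrA. Qed.

Lemma dotvNl k (u w : 'rV[R]_k) : dotv (- u) w = - dotv u w.
Proof. by rewrite -scaleN1r dotvZl mulN1r. Qed.

Lemma dotvBl k (u v w : 'rV[R]_k) : dotv (u - v) w = dotv u w - dotv v w.
Proof. by rewrite dotvDl dotvNl. Qed.

Lemma dotvDr k (u v w : 'rV[R]_k) : dotv w (u + v) = dotv w u + dotv w v.
Proof. by rewrite dotvC dotvDl !(dotvC w). Qed.
Lemma dotvZr k a (u w : 'rV[R]_k) : dotv w (a *: u) = a * dotv w u.
Proof. by rewrite dotvC dotvZl dotvC. Qed.
Lemma dotvNr k (u w : 'rV[R]_k) : dotv w (- u) = - dotv w u.
Proof. by rewrite dotvC dotvNl dotvC. Qed.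
Lemma dotvBr k (u v w : 'rV[R]_k) : dotv w (u - v) = dotv w u - dotv w v.
Proof. by rewrite dotvDr dotvNr. Qed.
Lemma dotv0l k (w : 'rV[R]_k) : dotv 0 w = 0.
Proof. by rewrite /dotv big1 // => i _; rewrite mxE mul0r. Qed.
Lemma dotv0r k (w : 'rV[R]_k) : dotv w 0 = 0.
Proof. by rewrite dotvC dotv0l. Qed.

Lemma dotv_ge0 k (v : 'rV[R]_k) : 0 <= dotv v v.
Proof. by apply: sumr_ge0 => i _; rewrite -expr2 sqr_ge0. Qed.

Lemma enorm2 k (v : 'rV[R]_k) : enorm v ^+ 2 = dotv v v.
Proof. by rewrite /enorm sqr_sqrtr // dotv_ge0. Qed.

Lemma enorm_ge0 k (v : 'rV[R]_k) : 0 <= enorm v.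
Proof. exact: sqrtr_ge0. Qed.

Lemma dotv_row_mx k1 k2 (a c : 'rV[R]_k1) (b d : 'rV[R]_k2) :
  dotv (row_mx a b) (row_mx c d) = dotv a c + dotv b d.
Proof.
rewrite /dotv big_split_ord /=; congr (_ + _); apply: eq_bigr => i _.
  by rewrite !row_mxEl.
by rewrite !row_mxEr.
Qed.

Lemma dotv_mulmx k1 k2 (u : 'rV[R]_k1) (A : 'M[R]_(k1,k2)) (v : 'rV[R]_k2) :
  dotv (u *m A) v = dotv u (v *m A^T).
Proof.
rewrite /dotv.
under eq_bigr do rewrite mxE mulr_suml.
rewrite exchange_big /=; apply: eq_bigr => j _.
rewrite mxE mulr_sumr; apply: eq_bigr => i _.
by rewrite mxE; ring.
Qed.

Lemma dotv_suml k I (r : seq I) (P : pred I) (F : I -> 'rV[R]_k) w :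
  dotv (\sum_(i <- r | P i) F i) w = \sum_(i <- r | P i) dotv (F i) w.
Proof.
elim/big_rec2: _; first by rewrite dotv0l.
by move=> i y1 y2 _ <-; rewrite dotvDl.
Qed.

Lemma lsubmxD k1 k2 (u v : 'rV[R]_(k1 + k2)) : lsubmx (u + v) = lsubmx u + lsubmx v.
Proof. exact: linearD. Qed.

End Dot.
Section Spec.
Variable R : realType.

Lemma le_eps (X Y K : R) :
  (forall a, 0 < a -> a <= 1 -> X <= Y + a * K) -> X <= Y.
Proof.
move=> H; rewrite leNgt; apply/negP => YX.
have [K0|K0] := leP K 0.
  by have := H 1 ltr01 (lexx _); lra.
pose b := (X - Y) / (2 * K).
have b0 : 0 < b by rewrite /b divr_gt0 // ?subr_gt0 // mulr_gt0.
have bK : b * K = (X - Y) / 2.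
  by rewrite /b; field; rewrite gt_eqF.
have [b1|b1] := leP b 1.
  by have := H b b0 b1; rewrite bK; lra.
have := H 1 ltr01 (lexx _); rewrite mul1r => HK.
have : 1 * K <= b * K by rewrite ler_pM2r // ltW.
rewrite bK; lra.
Qed.

Lemma invM_le1 (c e : R) : 0 < c -> e <= c -> c^-1 * e <= 1.
Proof.
move=> c0 ec; rewrite -(mulVf (lt0r_neq0 c0)); apply: ler_wpM2l => //.
by rewrite invr_ge0 ltW.
Qed.

Lemma enormZ k a (v : 'rV[R]_k) : enorm (a *: v) = `|a| * enorm v.
Proof.
rewrite /enorm dotvZl dotvZr mulrA -expr2 sqrtrM ?sqr_ge0 //.
by rewrite sqrtr_sqr.
Qed.

Lemma coord_sq_le k (u : 'rV[R]_k) j : u 0 j ^+ 2 <= dotv u u.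
Proof.
rewrite /dotv (bigD1 j) //= -expr2 lerDl.
by apply: sumr_ge0 => i _; rewrite -expr2 sqr_ge0.
Qed.

Lemma specset_ub p n (A : 'M[R]_(p, n)) :
  has_ubound [set enorm (u *m A^T) | u in [set u : 'rV[R]_n | enorm u <= 1]].
Proof.
pose c i := \sum_(j < n) `|A i j|.
exists (Num.sqrt (\sum_(i < p) c i ^+ 2)) => _ [u /= u1 <-].
rewrite /enorm ler_sqrt; last by apply: sumr_ge0 => i _; exact: sqr_ge0.
apply: ler_sum => i _; rewrite -expr2.
have du : dotv u u <= 1 by rewrite -enorm2; apply: exprn_ile1 => //; exact: enorm_ge0.
have uj : forall j, `|u 0 j| <= 1.
  move=> j; rewrite -(@expr_le1 _ 2) // real_normK ?num_real //.
  exact: le_trans (coord_sq_le u j) du.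
have wi : `|(u *m A^T) 0 i| <= c i.
  rewrite mxE (le_trans (ler_norm_sum _ _ _)) //; apply: ler_sum => j _.
  rewrite mxE normrM -[X in _ <= X]mul1r ler_wpM2r //.
rewrite -real_normK ?num_real // !expr2.
by apply: ler_pM => //; exact: le_trans wi.
Qed.

Lemma specset_ne p n (A : 'M[R]_(p, n)) :
  [set enorm (u *m A^T) | u in [set u : 'rV[R]_n | enorm u <= 1]] !=set0.
Proof.
exists (enorm ((0 : 'rV[R]_n) *m A^T)); exists 0 => //=.
by rewrite /enorm dotv0l sqrtr0.
Qed.

Lemma specnorm_ge0 p n (A : 'M[R]_(p, n)) : 0 <= specnorm A.
Proof.
apply: le_trans (enorm_ge0 ((0 : 'rV[R]_n) *m A^T)) _.
apply: sup_upper_bound; first by split; [exact: specset_ne | exact: specset_ub].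
by exists 0 => //=; rewrite /enorm dotv0l sqrtr0.
Qed.

Lemma specnorm_bound p n (A : 'M[R]_(p, n)) (u : 'rV[R]_n) :
  enorm (u *m A^T) <= specnorm A * enorm u.
Proof.
apply: (@le_eps _ _ (specnorm A)) => a a0 a1.
set e := enorm u.
have e0 : 0 <= e := enorm_ge0 u.
have ea : 0 < e + a by lra.
have : enorm (((e + a)^-1 *: u) *m A^T) <= specnorm A.
  apply: sup_upper_bound; first by split; [exact: specset_ne | exact: specset_ub].
  exists ((e + a)^-1 *: u) => //=.
  rewrite enormZ ger0_norm; last by rewrite invr_ge0 ltW.
  by rewrite -/e; apply: invM_le1 => //; lra.
have -> : ((e + a)^-1 *: u) *m A^T = (e + a)^-1 *: (u *m A^T) by rewrite scalemxAl.
rewrite enormZ ger0_norm; last by rewrite invr_ge0 ltW.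
move=> h.
have := ler_wpM2l (ltW ea) h; rewrite mulrA mulfV ?gt_eqF // mul1r => h2.
by apply: (le_trans h2); rewrite mulrDl mulrC.
Qed.

End Spec.
Section Tr.
Variable R : realType.

Lemma trbound p n (A : 'M[R]_(p, n)) (v : 'rV[R]_p) :
  0 < specnorm A ^+ 2 ->
  dotv (v *m A) (v *m A) <= specnorm A ^+ 2 * dotv v v.
Proof.
move=> S0.
set S2 := specnorm A ^+ 2; set y := v *m A; set z := y *m A^T.
have hq : dotv y y = dotv v z by rewrite /y dotv_mulmx.
have hz : dotv z z <= S2 * dotv y y.
  rewrite -!enorm2 /S2 -exprMn ler_pXn2r // ?nnegrE ?enorm_ge0 //.
    exact: specnorm_bound.
  by rewrite mulr_ge0 ?specnorm_ge0 ?enorm_ge0.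
have h0 := dotv_ge0 (S2 *: v - z).
rewrite !(dotvBl, dotvBr, dotvZl, dotvZr) (dotvC z v) -hq in h0.
have vv := dotv_ge0 v; have yy := dotv_ge0 y.
set q := dotv y y in hz h0 *; set V := dotv v v in h0 vv *; set Z := dotv z z in hz h0.
have : S2 * q <= S2 * (S2 * V) by nra.
by rewrite ler_pM2l.
Qed.

End Tr.
Section Lim.
Variable R : realType.

Lemma lim_le (g : R -> R) (L c K : R) :
  g @ 0^' --> L ->
  (forall a, 0 < a -> a <= 1 -> c <= g a + a * K) -> c <= L.
Proof.
move=> gL H; rewrite leNgt; apply/negP => Lc.
pose d := c - L.
have d0 : 0 < d by rewrite subr_gt0.
have gR : g @ 0^'+ --> L by exact: cvg_dnbhs_at_right.
pose k := `|K| + 1.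
have k0 : 0 < k by rewrite /k ltr_pwDr // normr_ge0.
pose eps := Num.min 1 (d / (2 * k)).
have eps0 : 0 < eps by rewrite lt_min ltr01 divr_gt0 // mulr_gt0.
have F1 : \forall a \near 0^'+, g a < L + d / 2.
  by apply: (cvgr_lt L) => //; rewrite ltrDl divr_gt0.
have F2 : \forall a \near (0:R)^'+, 0 < a by exact: nbhs_right_gt.
have F3 : \forall a \near (0:R)^'+, a < eps by apply: nbhs_right_lt.
have PF : ProperFilter (0:R)^'+ := at_right_proper_filter 0.
have [a [[ga a0] ae]] := filter_ex (filterI (filterI F1 F2) F3).
have ae1 : a <= 1 by apply: ltW; apply: lt_le_trans ae _; rewrite ge_min lexx.
have aed : a * (2 * k) < d.
  rewrite -ltr_pdivlMr ?mulr_gt0 //; apply: lt_le_trans ae _.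
  by rewrite ge_min lexx orbT.
have := H a a0 ae1.
have Kk : K <= k by rewrite /k; apply: le_trans (ler_norm K) _; rewrite lerDl.
have : a * K <= a * k by rewrite ler_pM2l.
move=> h1 h2.
have e2 : a * k * 2 < c - L by rewrite -mulrA [k * 2]mulrC.
rewrite /d in ga; lra.
Qed.

End Lim.
Section Der.
Variable R : realType.

Lemma lim_ge (g : R -> R) (L c K : R) :
  g @ 0^' --> L ->
  (forall a, 0 < a -> a <= 1 -> g a <= c + a * K) -> L <= c.
Proof.
move=> gL H; rewrite -lerN2; apply: (@lim_le _ (fun a => - g a) _ _ K).
  exact: cvgN.
by move=> a a0 a1; have h := H a a0 a1; lra.
Qed.

Lemma dirder n p (Phi : 'rV[R]_n -> 'rV[R]_p) z d : differentiable Phi z ->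
  (fun h : R => h^-1 *: (Phi (h *: d + z) - Phi z)) @ 0^' --> d *m jacobian Phi z.
Proof.
move=> dz; have := diff_derivable (v:=d) dz; rewrite /derivable.
have := deriveEjacobian d dz; rewrite /derive => <-.
by [].
Qed.

Lemma dirder_coord n p (Phi : 'rV[R]_n -> 'rV[R]_p) z d i : differentiable Phi z ->
  (fun h : R => (h^-1 *: (Phi (h *: d + z) - Phi z)) 0 i) @ 0^' --> (d *m jacobian Phi z) 0 i.
Proof.
move=> dz; exact: (continuous_cvg _ (@coord_continuous R 1 p 0 i (d *m jacobian Phi z)) (dirder (d:=d) dz)).
Qed.

Lemma dirder_dot n p (Phi : 'rV[R]_n -> 'rV[R]_p) z d (l : 'rV[R]_p) :
  differentiable Phi z ->
  (fun h : R => dotv l (h^-1 *: (Phi (h *: d + z) - Phi z))) @ 0^' -->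
    dotv l (d *m jacobian Phi z).
Proof.
move=> dz; rewrite /dotv.
apply: cvg_big.
- first [exact: add_continuous | exact: (@add_continuous R R) | exact: (@add_continuous R^o)].
- move=> i _; apply: cvgMl_tmp; exact: dirder_coord.
Qed.

End Der.
Section Grad.
Variable R : realType.

Lemma conv_pt k (a : R) (y z : 'rV[R]_k) : a *: (y - z) + z = a *: y + (1 - a) *: z.
Proof. by apply/rowP => j; rewrite !mxE; ring. Qed.

Lemma inv_le (a u v : R) : 0 < a -> u <= a * v -> a^-1 * u <= v.
Proof.
move=> a0 h; rewrite -(mulKf (lt0r_neq0 a0) v); apply: ler_wpM2l => //.
by rewrite invr_ge0 ltW.
Qed.

Lemma grad_ineq n p (Phi : 'rV[R]_n -> 'rV[R]_p) i z y :
  convex_fun (fun z => Phi z 0 i) -> differentiable Phi z ->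
  ((y - z) *m jacobian Phi z) 0 i <= Phi y 0 i - Phi z 0 i.
Proof.
move=> cv dz.
have := dirder_coord (d:=y - z) (i:=i) dz => /(@lim_ge _ _ _ (Phi y 0 i - Phi z 0 i) 0); apply => a a0 a1.
rewrite mulr0 addr0 !mxE conv_pt; apply: inv_le => //.
have := cv y z a; rewrite ltW //= a1 => /(_ isT) h; lra.
Qed.

End Grad.
Section Conv.
Variable R : realType.

Lemma conv_mem k (X : set 'rV[R]_k) (cX : convex_set X) x y (a : R) :
  X x -> X y -> 0 <= a -> a <= 1 -> X (a *: x + (1 - a) *: y).
Proof.
move=> Xx Xy a0 a1.
have := cX x y (Itv01 a0 a1) (mem_set Xx) (mem_set Xy) => /set_mem.
by [].
Qed.

End Conv.
Section XFoc.
Variable R : realType.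

Lemma dot_sq k (e d : 'rV[R]_k) (a : R) :
  dotv (e + a *: d) (e + a *: d) = dotv e e + 2 * a * dotv e d + a ^+ 2 * dotv d d.
Proof.
rewrite !(dotvDl, dotvDr, dotvZl, dotvZr) (dotvC d e); ring.
Qed.

Lemma xfoc n p (X : set 'rV[R]_n) (f : 'rV[R]_n -> R) (Phi : 'rV[R]_n -> 'rV[R]_p)
  rho eta lk xk xbk (rk : R) x :
  convex_set X -> convex_fun f ->
  0 <= rho -> 0 < eta -> X xbk -> X x -> differentiable Phi xbk ->
  (forall y, X y -> Lag f Phi xbk lk rho eta + rk / 2 * enorm (xbk - xk) ^+ 2
                   <= Lag f Phi y lk rho eta + rk / 2 * enorm (y - xk) ^+ 2) ->
  0 <= rho * (f x - f xbk) + eta^-1 * dotv lk ((x - xbk) *m jacobian Phi xbk)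
       + rk * dotv (xbk - xk) (x - xbk).
Proof.
move=> cX cf r0 e0 Xb Xx dz hmin.
set d := x - xbk.
apply: (@lim_le R (fun a => rho * (f x - f xbk)
     + eta^-1 * dotv lk (a^-1 *: (Phi (a *: d + xbk) - Phi xbk))
     + rk * dotv (xbk - xk) d) _ 0 (rk / 2 * dotv d d)).
  apply: cvgD; last exact: cvg_cst.
  apply: cvgD; first exact: cvg_cst.
  apply: cvgMl_tmp; exact: dirder_dot.
move=> a a0 a1 /=.
set ya := a *: d + xbk.
have Xya : X ya by rewrite /ya /d conv_pt; apply: conv_mem => //; exact: ltW.
have H := hmin ya Xya.
rewrite /Lag !enorm2 in H.
have eq : ya - xk = (xbk - xk) + a *: d by rewrite /ya; apply/rowP=> j; rewrite !mxE; ring.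
rewrite eq dot_sq in H.
have hf : f ya <= a * f x + (1 - a) * f xbk by rewrite /ya /d conv_pt; apply: cf; rewrite (ltW a0) a1.
have hr : rho * f ya <= rho * (a * f x + (1 - a) * f xbk) by rewrite ler_wpM2l.
rewrite dotvZr dotvBr.
set Ly := dotv lk (Phi ya) in H *; set Lb := dotv lk (Phi xbk) in H *.
set ed := dotv (xbk - xk) d in H *; set dd := dotv d d in H *; set ee := dotv (xbk - xk) (xbk - xk) in H *.
set T := (X in 0 <= X).
have E : a * T = rho * a * (f x - f xbk) + eta^-1 * (Ly - Lb) + rk * a * ed + rk / 2 * a ^+ 2 * dd.
  by rewrite /T; field; rewrite (lt0r_neq0 e0) (lt0r_neq0 a0).
have : 0 <= a * T.
  rewrite E; nra.
by rewrite pmulr_rge0.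
Qed.

End XFoc.
Section LFoc.
Variable R : realType.

Lemma lfoc n p (f : 'rV[R]_n -> R) (Phi : 'rV[R]_n -> 'rV[R]_p)
  rho eta (sk : R) lk xbk lbk l :
  nonneg lbk -> nonneg l ->
  (forall l, nonneg l ->
     Lag f Phi xbk l rho eta - sk / 2 * enorm (l - lk) ^+ 2
     <= Lag f Phi xbk lbk rho eta - sk / 2 * enorm (lbk - lk) ^+ 2) ->
  eta^-1 * dotv (l - lbk) (Phi xbk) <= sk * dotv (lbk - lk) (l - lbk).
Proof.
move=> nb nl hmax.
set b := l - lbk.
apply: (@le_eps R _ _ (sk / 2 * dotv b b)) => a a0 a1.
have nla : nonneg (lbk + a *: b).
  move=> i; rewrite /b !mxE.
  have := nb i; have := nl i; move=> h1 h2.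
  have -> : lbk 0 i + a * (l 0 i + - lbk 0 i) = a * l 0 i + (1 - a) * lbk 0 i by ring.
  by apply: addr_ge0; apply: mulr_ge0 => //; lra.
have H := hmax _ nla.
rewrite /Lag !enorm2 in H.
have eq : lbk + a *: b - lk = (lbk - lk) + a *: b by apply/rowP=> j; rewrite !mxE; ring.
rewrite eq dot_sq dotvDl dotvZl in H.
set P := dotv b (Phi xbk) in H *; set vb := dotv (lbk - lk) b in H *.
set bb := dotv b b in H *; set vv := dotv (lbk - lk) (lbk - lk) in H *.
set L0 := dotv lbk (Phi xbk) in H *.
have : a * (eta^-1 * P) <= a * (sk * vb + a * (sk / 2 * bb)) by nra.
by rewrite ler_pM2l.
Qed.

End LFoc.
Section MStep.
Variable R : realType.

Lemma mstep n p (Phi : 'rV[R]_n -> 'rV[R]_p) eta r xk lk xbk lbk xk1 lk1 :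
  row_mx xk1 lk1 = row_mx xk lk - (row_mx xk lk - row_mx xbk lbk) *m (Mmat Phi eta r xbk)^T ->
  xk1 = xbk + (eta * r)^-1 *: ((lk - lbk) *m (jacobian Phi xbk)^T) /\ lk1 = lbk.
Proof.
rewrite /Mmat tr_block_mx !trmx1 trmx0 !(opp_row_mx, add_row_mx) mul_row_block.
rewrite !mulmx1 !mulmx0 add0r.
rewrite !(opp_row_mx, add_row_mx) => /eq_row_mx [-> ->]; split.
  rewrite /Jac linearN /= linearZ /= !trmxK mulmxN -scalemxAr.
  by apply/rowP => j; rewrite !mxE; ring.
by apply/rowP => j; rewrite !mxE; ring.
Qed.


End MStep.
Section Step.
Variable R : realType.

Lemma grad_dot n p (Phi : 'rV[R]_n -> 'rV[R]_p) (l : 'rV[R]_p) z y :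
  (forall i, convex_fun (fun z => Phi z 0 i)) -> differentiable Phi z -> nonneg l ->
  dotv l ((y - z) *m jacobian Phi z) <= dotv l (Phi y) - dotv l (Phi z).
Proof.
move=> cv dz nl; rewrite /dotv -sumrB; apply: ler_sum => i _.
by rewrite -mulrBr; apply: ler_wpM2l => //; exact: grad_ineq.
Qed.

Lemma gamma_row n p (Phi : 'rV[R]_n -> 'rV[R]_p) xs ls :
  Gamma Phi (row_mx xs ls) = row_mx (ls *m Jac Phi xs) (- Phi xs).
Proof. by rewrite /Gamma row_mxKl row_mxKr. Qed.

Lemma sqrt_gt0 (a : R) : 0 < a -> 0 < Num.sqrt a.
Proof. by move=> a0; rewrite sqrtr_gt0. Qed.

Lemma dotDD k (x y : 'rV[R]_k) : dotv (x + y) (x + y) = dotv x x + 2 * dotv x y + dotv y y.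
Proof. by rewrite !(dotvDl, dotvDr) (dotvC y x); ring. Qed.

Lemma step_arith (rho fb fs E B1 P1 P2 Q1 Q2 A1 A2 rk sk c aa au uu bb bv vv ww : R) :
  E * B1 <= E * (Q1 - Q2) ->
  E * - A2 <= E * (P1 - P2) ->
  rk * (2 * c * (A1 - A2)) = 2 * (E * (A1 - A2)) ->
  rk * (c ^+ 2 * ww) <= sk * vv ->
  0 <= rho * (fs - fb) + E * - A1 + rk * au ->
  E * - (P2 - Q1) <= sk * bv ->
  0 <= rk * uu ->
  rho * fb - rho * fs + E * (B1 - (P1 - Q2)) <=
  2^-1 * (rk * (aa + 2 * au + uu) + sk * (bb + 2 * bv + vv)) -
  2^-1 * (rk * (aa + 2 * c * (A1 - A2) + c ^+ 2 * ww) + sk * bb).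
Proof. move=> *; lra. Qed.

Lemma step n p (X : set 'rV[R]_n) (f : 'rV[R]_n -> R) (Phi : 'rV[R]_n -> 'rV[R]_p)
  rho mu eta xk lk xbk lbk xk1 lk1 xs ls :
  convex_set X -> convex_fun f -> (forall i, convex_fun (fun z => Phi z 0 i)) ->
  (forall z, differentiable Phi z) ->
  0 < rho -> 1 < mu -> 0 < eta -> 0 < RR Phi xk -> 0 < RR Phi xbk ->
  spice_step X f Phi rho mu eta xk lk xbk lbk xk1 lk1 ->
  X xs -> nonneg ls ->
  rho * f xbk - rho * f xs
    + eta^-1 * dotv (row_mx xbk lbk - row_mx xs ls) (Gamma Phi (row_mx xs ls))
  <= 2^-1 * ((eta^-1 * Num.sqrt (RR Phi xk)) * dotv (xk - xs) (xk - xs)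
             + (mu * RR Phi xbk / (eta * Num.sqrt (RR Phi xk))) * dotv (lk - ls) (lk - ls))
   - 2^-1 * ((eta^-1 * Num.sqrt (RR Phi xk)) * dotv (xk1 - xs) (xk1 - xs)
             + (mu * RR Phi xbk / (eta * Num.sqrt (RR Phi xk))) * dotv (lk1 - ls) (lk1 - ls)).
Proof.
move=> cX cf cP dP r0 m1 e0 Rk Rb [Xb hx nb hl heq] Xs ns.
set rk := eta^-1 * Num.sqrt (RR Phi xk).
set sk := mu * RR Phi xbk / (eta * Num.sqrt (RR Phi xk)).
have sR := sqrt_gt0 Rk.
have rk0 : 0 < rk by rewrite /rk mulr_gt0 // invr_gt0.
move: heq => /mstep [-> ->].
set c := (eta * rk)^-1.
set jb := jacobian Phi xbk; set js := jacobian Phi xs.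
set v := lk - lbk; set w := v *m jb^T.
set a := xbk - xs; set u := xk - xbk; set b := lbk - ls.
have HX := xfoc (x := xs) cX cf (ltW r0) e0 Xb Xs (dP xbk) hx.
have HL := lfoc nb ns hl.
have C1 := grad_dot (l := lbk) xs cP (dP xbk) nb.
have C2 := grad_dot (l := ls) xbk cP (dP xs) ns.
have TB := trbound v Rb.
rewrite gamma_row !(opp_row_mx, add_row_mx) dotv_row_mx -/a -/b.
have -> : dotv a (ls *m Jac Phi xs) = dotv ls (a *m js).
  by rewrite dotvC dotv_mulmx /Jac trmxK.
have eq1 : xbk + c *: w - xs = a + c *: w by rewrite /a; apply/rowP => j; rewrite !mxE; ring.
have eq2 : xk - xs = a + u by rewrite /a /u; apply/rowP => j; rewrite !mxE; ring.
have eq3 : lk - ls = b + v by rewrite /b /v; apply/rowP => j; rewrite !mxE; ring.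
rewrite eq1 eq2 eq3 (dot_sq a w c) (dotDD a u) (dotDD b v).
have eq4 : dotv a w = dotv lk (a *m jb) - dotv lbk (a *m jb).
  by rewrite /w dotvC dotv_mulmx trmxK -dotvBl.
rewrite eq4.
have eq5 : (xs - xbk) = - a by rewrite /a opprB.
rewrite eq5 mulNmx !dotvNr in HX C1.
have eq6 : xbk - xk = - u by rewrite /u opprB.
rewrite eq6 dotvNl opprK in HX.
have eq7 : ls - lbk = - b by rewrite /b opprB.
have eq8 : lbk - lk = - v by rewrite /v opprB.
rewrite eq7 eq8 !(dotvNl, dotvNr) ?opprK in HL.
rewrite -/a in C2.
have eb1 : dotv b (Phi xbk) = dotv lbk (Phi xbk) - dotv ls (Phi xbk) by rewrite /b dotvBl.
have eb2 : dotv b (Phi xs) = dotv lbk (Phi xs) - dotv ls (Phi xs) by rewrite /b dotvBl.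
rewrite eb1 (dotvC v b) in HL; rewrite dotvNr eb2.
have Wb : dotv w w <= RR Phi xbk * dotv v v by rewrite /w /RR /Jac.
have rc : rk * c = eta^-1 by rewrite /c invfM mulrCA mulfV ?mulr1 // lt0r_neq0.
have rc2 : rk * c ^+ 2 * RR Phi xbk <= sk.
  have -> : rk * c ^+ 2 * RR Phi xbk = RR Phi xbk / (eta * Num.sqrt (RR Phi xk)).
    rewrite /c /rk; field.
    by rewrite !lt0r_neq0 // mulr_gt0 // invr_gt0.
  rewrite /sk -mulrA ler_pMl ?ltW // divr_gt0 // mulr_gt0 //.
have vv := dotv_ge0 v; have uu := dotv_ge0 u.
have ei : 0 < eta^-1 by rewrite invr_gt0.
rewrite -/rk (dotvC u a) in HX; rewrite -/sk in HL.
rewrite -/jb in HX C1; rewrite -/js in C2.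
set A1 := dotv lk (a *m jb) in HX *; set A2 := dotv lbk (a *m jb) in C1 *.
set B1 := dotv ls (a *m js) in C2 *.
set P1 := dotv lbk (Phi xs) in C1 *; set P2 := dotv lbk (Phi xbk) in C1 HL *.
set Q1 := dotv ls (Phi xbk) in C2 HL *; set Q2 := dotv ls (Phi xs) in C2 *.
set E := eta^-1 in HX HL ei rc *.
have F1 : E * B1 <= E * (Q1 - Q2) by rewrite ler_wpM2l // ltW.
have F2 : E * (- A2) <= E * (P1 - P2) by rewrite ler_wpM2l // ltW.
have F3 : rk * (2 * c * (A1 - A2)) = 2 * (E * (A1 - A2)) by rewrite -rc; ring.
have F4 : rk * (c ^+ 2 * dotv w w) <= sk * dotv v v.
  have cc : 0 <= rk * c ^+ 2 by rewrite mulr_ge0 ?sqr_ge0 // ltW.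
  have h1 := ler_wpM2l cc Wb.
  have h2 := ler_wpM2r vv rc2.
  rewrite mulrA; apply: le_trans h1 _; rewrite mulrA; exact: h2.
have F5 := ler_wpM2l (ltW r0) (lexx (f xbk)).
refine (step_arith _ _ F1 F2 F3 F4 HX HL _).
by rewrite mulr_ge0 // ltW.
Qed.

End Step.
Section Avg.
Variable R : realType.

Lemma sum_pos (w : nat -> R) m :
  (forall k, (k <= m)%N -> 0 < w k) -> 0 < \sum_(0 <= k < m.+1) w k.
Proof.
move=> hw; rewrite big_nat_recr //= ltr_wpDl //; last exact: hw.
rewrite big_nat; apply: sumr_ge0 => k /andP [_ km]; apply: ltW; apply: hw.
by apply: ltnW.
Qed.

Lemma avg_split n (W w : R) (S y : 'rV[R]_n) : 0 < W -> 0 < w ->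
  (W + w)^-1 *: (S + w *: y) = (w / (W + w)) *: y + (1 - w / (W + w)) *: (W^-1 *: S).
Proof.
move=> W0 w0; have Ww : 0 < W + w by rewrite addr_gt0.
apply/rowP => j; rewrite !mxE; field.
by rewrite !lt0r_neq0.
Qed.

Lemma wavg_mem n (X : set 'rV[R]_n) (w : nat -> R) (y : nat -> 'rV[R]_n) m :
  convex_set X ->
  (forall k, (k <= m)%N -> 0 < w k) -> (forall k, (k <= m)%N -> X (y k)) ->
  X ((\sum_(0 <= k < m.+1) w k)^-1 *: \sum_(0 <= k < m.+1) w k *: y k).
Proof.
move=> cX; elim: m => [|m IH] hw hy.
  rewrite !big_nat1 scalerA mulVf ?scale1r; last by rewrite lt0r_neq0 // hw.
  exact: hy.
have W0 := sum_pos (m := m) (fun k km => hw k (leqW km)).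
have w0 : 0 < w m.+1 by exact: hw.
rewrite (big_nat_recr m.+1) // (big_nat_recr m.+1) //= avg_split //.
have Ww : 0 < \sum_(0 <= k < m.+1) w k + w m.+1 by rewrite addr_gt0.
apply: conv_mem => //.
- exact: hy.
- apply: IH => k km; [exact: hw (leqW km) | exact: hy (leqW km)].
- by rewrite divr_ge0 // ltW.
- by rewrite ler_pdivrMr // mul1r lerDr ltW.
Qed.

Lemma jensen n (f : 'rV[R]_n -> R) (w : nat -> R) (y : nat -> 'rV[R]_n) m :
  convex_fun f -> (forall k, (k <= m)%N -> 0 < w k) ->
  f ((\sum_(0 <= k < m.+1) w k)^-1 *: \sum_(0 <= k < m.+1) w k *: y k)
  <= (\sum_(0 <= k < m.+1) w k)^-1 * \sum_(0 <= k < m.+1) w k * f (y k).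
Proof.
move=> cf; elim: m => [|m IH] hw.
  rewrite !big_nat1 scalerA mulVf ?scale1r; last by rewrite lt0r_neq0 // hw.
  by rewrite mulrA mulVf ?mul1r // lt0r_neq0 // hw.
have W0 := sum_pos (m := m) (fun k km => hw k (leqW km)).
have w0 : 0 < w m.+1 by exact: hw.
rewrite (big_nat_recr m.+1) // (big_nat_recr m.+1) // (big_nat_recr m.+1) //= avg_split //.
set W := \sum_(0 <= k < m.+1) w k.
have Ww : 0 < W + w m.+1 by rewrite addr_gt0.
set a := w m.+1 / (W + w m.+1).
have a0 : 0 <= a by rewrite divr_ge0 // ltW.
have a1 : a <= 1 by rewrite ler_pdivrMr // mul1r lerDr ltW.
apply: le_trans; first by apply: cf; rewrite a0 a1.
have IH' := IH (fun k km => hw k (leqW km)); rewrite -/W in IH'.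
have h1 : (1 - a) * f (W^-1 *: \sum_(0 <= i < m.+1) w i *: y i)
        <= (1 - a) * (W^-1 * \sum_(0 <= k < m.+1) w k * f (y k)).
  by apply: ler_wpM2l => //; rewrite subr_ge0.
set F := \sum_(0 <= k < m.+1) w k * f (y k) in IH' h1 *.
have -> : (W + w m.+1)^-1 * (F + w m.+1 * f (y m.+1)) = a * f (y m.+1) + (1 - a) * (W^-1 * F).
  rewrite /a; field; by rewrite !lt0r_neq0.
by rewrite lerD2l.
Qed.

End Avg.
Section QN.
Variable R : realType.

Lemma mul_tr00 k (u v : 'rV[R]_k) : (u *m v^T) 0 0 = dotv u v.
Proof. by rewrite mxE; apply: eq_bigr => i _; rewrite mxE. Qed.

Lemma qnorm_H0 n p (Phi : 'rV[R]_n -> 'rV[R]_p) mu x0 xb0 (dx : 'rV[R]_n) (dl : 'rV[R]_p) :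
  qnorm2 (H0mat Phi mu x0 xb0) (row_mx dx dl) =
  Num.sqrt (RR Phi x0) * dotv dx dx
  + mu * RR Phi xb0 / Num.sqrt (RR Phi x0) * dotv dl dl.
Proof.
rewrite /qnorm2 /H0mat mul_row_block !mulmx0 addr0 add0r !mul_mx_scalar.
rewrite tr_row_mx mul_row_col -!scalemxAl -!mul_tr00 !mxE.
by [].
Qed.

Lemma dotv_swap k (a b : 'rV[R]_k) : dotv (a - b) (a - b) = dotv (b - a) (b - a).
Proof. by rewrite -opprB dotvNl dotvNr opprK. Qed.

Lemma div_le_div (a b c d : R) : 0 < b -> 0 < d -> a * d <= c * b -> a / b <= c / d.
Proof. by move=> b0 d0 h; rewrite ler_pdivrMr // mulrAC ler_pdivlMr. Qed.

End QN.
Section Mono.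
Variable R : realType.

Lemma r_mono (e0 e1 R0 R1 : R) : 0 < e0 -> 0 < e1 -> 0 < R0 -> 0 < R1 ->
  e0 * Num.sqrt (R1 / R0) <= e1 ->
  e1^-1 * Num.sqrt R1 <= e0^-1 * Num.sqrt R0.
Proof.
move=> p0 p1 q0 q1 h.
have s0 := sqrt_gt0 q0; have s1 := sqrt_gt0 q1.
rewrite sqrtrM in h; last exact: ltW q1.
rewrite sqrtrV in h; last exact: ltW q0.
have h2 := ler_wpM2r (ltW s0) h.
have e : e0 * (Num.sqrt R1 * (Num.sqrt R0)^-1) * Num.sqrt R0 = Num.sqrt R1 * e0.
  by field; rewrite lt0r_neq0.
rewrite e in h2.
rewrite ![_^-1 * Num.sqrt _]mulrC; apply: div_le_div => //.
by rewrite [X in _ <= X]mulrC.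
Qed.

Lemma s_mono (mu e0 e1 R0 R1 B0 B1 : R) : 0 < mu -> 0 < e0 -> 0 < e1 -> 0 < R0 -> 0 < R1 ->
  0 < B0 -> 0 < B1 ->
  e0 * (B1 * Num.sqrt R0) / (B0 * Num.sqrt R1) <= e1 ->
  mu * B1 / (e1 * Num.sqrt R1) <= mu * B0 / (e0 * Num.sqrt R0).
Proof.
move=> m0 p0 p1 q0 q1 b0 b1 h.
have s0 := sqrt_gt0 q0; have s1 := sqrt_gt0 q1.
rewrite ler_pdivrMr ?mulr_gt0 // in h.
apply: div_le_div; rewrite ?mulr_gt0 //.
have h2 := ler_wpM2l (ltW m0) h.
apply: (le_trans (_ : _ <= mu * (e1 * (B0 * Num.sqrt R1)))).
  by apply: le_trans h2; rewrite le_eqVlt; apply/orP; left; apply/eqP; ring.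
by rewrite le_eqVlt; apply/orP; left; apply/eqP; ring.
Qed.

Lemma tele_arith (Sm d e0 em e1 e2 : R) :
  Sm <= 2^-1 * e0 - 2^-1 * em -> d <= 2^-1 * e1 - 2^-1 * e2 -> e1 <= em ->
  Sm + d <= 2^-1 * e0 - 2^-1 * e2.
Proof. move=> *; lra. Qed.

Lemma tele_end (Sm e0 e : R) : Sm <= 2^-1 * e0 - 2^-1 * e -> 0 <= e -> Sm <= 2^-1 * e0.
Proof. move=> *; lra. Qed.

Lemma final_arith (fx Sf fs SP Dw S T rho ea e0 q E00 : R) :
  0 < S -> 0 < T -> 0 < rho -> 0 < e0 -> ea = T / S ->
  fx <= T^-1 * Sf ->
  rho * Sf - T * (rho * fs) + (SP - S * Dw) <= 2^-1 * E00 ->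
  E00 = e0^-1 * q ->
  fx - fs + (ea * rho)^-1 * (S^-1 * SP - Dw) <= (2 * e0 * rho * T)^-1 * q.
Proof.
move=> S0 T0 r0 p0 -> J TL E.
have K0 : 0 < (T * rho)^-1 by rewrite invr_gt0 mulr_gt0.
have e1 : (T / S * rho)^-1 * (S^-1 * SP - Dw) = (T * rho)^-1 * (SP - S * Dw).
  by field; rewrite !lt0r_neq0.
have e2 : (2 * e0 * rho * T)^-1 * q = (T * rho)^-1 * (2^-1 * E00).
  by rewrite E; field; rewrite !lt0r_neq0.
have e3 : T^-1 * Sf - fs = (T * rho)^-1 * (rho * Sf - T * (rho * fs)).
  by field; rewrite !lt0r_neq0.
have h := ler_wpM2l (ltW K0) TL.
rewrite e1 e2.
have h2 : fx - fs <= (T * rho)^-1 * (rho * Sf - T * (rho * fs)) by rewrite -e3; lra.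
rewrite mulrDr in h; lra.
Qed.

End Mono.
Unset Implicit Arguments.

Theorem theorem3p3 (R : realType) (n p : nat)
  (X : set 'rV[R]_n) (f : 'rV[R]_n -> R) (Phi : 'rV[R]_n -> 'rV[R]_p)
  (rho mu : R) (eta : nat -> R) (t : nat)
  (x : nat -> 'rV[R]_n) (lam : nat -> 'rV[R]_p)
  (xb : nat -> 'rV[R]_n) (lamb : nat -> 'rV[R]_p) :
  (* X nonempty closed convex *)
  X !=set0 -> closed X -> convex_set X (* library notion, convex.v *) ->
  (* f convex; each phi_i convex and continuously differentiable *)
  convex_fun f ->
  (forall i : 'I_p, convex_fun (fun z => Phi z 0 i)) ->
  (forall z, differentiable Phi z) -> continuous (fun z => Jac Phi z) ->
  (* parameters *)
  0 < rho -> 1 < mu -> (forall k, 0 < eta k) ->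
  (* starting point in Omega *)
  X (x 0%N) -> nonneg (lam 0%N) ->
  (* iterations k = 0, ..., t *)
  (0 < t)%N ->
  (forall k, (k <= t)%N ->
     spice_step X f Phi rho mu (eta k) (x k) (lam k) (xb k) (lamb k)
                (x k.+1) (lam k.+1)) ->
  (* standing positivity assumption *)
  (forall k, (k <= t)%N -> 0 < RR Phi (x k) /\ 0 < RR Phi (xb k)) ->
  (* step-size condition *)
  (forall k, (1 <= k <= t)%N ->
     eta k.-1 * Num.sqrt (RR Phi (x k) / RR Phi (x k.-1)) <= eta k /\
     eta k.-1 * (RR Phi (xb k) * Num.sqrt (RR Phi (x k.-1)))
       / (RR Phi (xb k.-1) * Num.sqrt (RR Phi (x k))) <= eta k) ->
  let S := \sum_(0 <= k < t.+1) (eta k)^-1 in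
  let xbar_t := (t.+1%:R)^-1 *: \sum_(0 <= k < t.+1) xb k in
  let eta_avg := t.+1%:R / S in
  let wbar_t := S^-1 *: \sum_(0 <= k < t.+1) ((eta k)^-1 *: row_mx (xb k) (lamb k)) in
  inOmega X wbar_t /\
  forall (xs : 'rV[R]_n) (ls : 'rV[R]_p), X xs -> nonneg ls ->
    let ws := row_mx xs ls in
    f xbar_t - f xs
      + dotv (wbar_t - ws) ((eta_avg * rho)^-1 *: Gamma Phi ws)
    <= (2 * eta 0%N * rho * t.+1%:R)^-1
         * qnorm2 (H0mat Phi mu (x 0%N) (xb 0%N)) (ws - row_mx (x 0%N) (lam 0%N)).
Proof.
move=> hne clX cX cf cP dP cJ r0 m1 e0 X0 n0 t0 hstep hpos hcond S xbar_t eta_avg wbar_t.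
have ei : forall k, 0 < (eta k)^-1 by move=> k; rewrite invr_gt0.
have hS0 : 0 < S by rewrite /S; apply: sum_pos => k _; exact: ei.
split.
  split.
    rewrite /wbar_t linearZ /= linear_sum /=.
    under eq_bigr do rewrite linearZ /= row_mxKl.
    apply: wavg_mem => //; try by move=> k _; exact: ei.
    by move=> k kt; case: (hstep k kt).
  move=> i; rewrite /wbar_t linearZ /= linear_sum /= mxE summxE.
  apply: mulr_ge0; first by rewrite invr_ge0 ltW.
  rewrite big_nat; apply: sumr_ge0 => k /andP [_ kt]; rewrite linearZ /= row_mxKr mxE.
  apply: mulr_ge0; first exact: ltW (ei k).
  by case: (hstep k kt).
move=> xs ls Xs ns; cbv zeta; set ws := row_mx xs ls.
pose r k := (eta k)^-1 * Num.sqrt (RR Phi (x k)).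
pose s k := mu * RR Phi (xb k) / (eta k * Num.sqrt (RR Phi (x k))).
pose E j k := r j * dotv (x k - xs) (x k - xs) + s j * dotv (lam k - ls) (lam k - ls).
pose G := Gamma Phi ws.
pose D k := rho * f (xb k) - rho * f xs + (eta k)^-1 * dotv (row_mx (xb k) (lamb k) - ws) G.
have hD : forall k, (k <= t)%N -> D k <= 2^-1 * E k k - 2^-1 * E k k.+1.
  move=> k kt; have [Rk Rb] := hpos k kt.
  exact: (step cX cf cP dP r0 m1 (e0 k) Rk Rb (hstep k kt) Xs ns).
have rpos : forall k, (k <= t)%N -> 0 <= r k.
  move=> k kt; have [Rk _] := hpos k kt.
  by rewrite mulr_ge0 // ?sqrtr_ge0 // ltW.
have spos : forall k, (k <= t)%N -> 0 <= s k.
  move=> k kt; have [Rk Rb] := hpos k kt.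
  have mu0 : 0 < mu by apply: lt_trans m1.
  apply: divr_ge0; apply: mulr_ge0.
  - exact: ltW mu0.
  - exact: ltW Rb.
  - exact: ltW (e0 k).
  - exact: sqrtr_ge0.
have hmono : forall m, (m.+1 <= t)%N -> E m.+1 m.+1 <= E m m.+1.
  move=> m mt; have [Rk Rb] := hpos m.+1 mt; have [Rk0 Rb0] := hpos m (ltnW mt).
  have [c1 c2] := hcond m.+1 (introT andP (conj isT mt)).
  have mu0 : 0 < mu by apply: lt_trans m1.
  have hr : r m.+1 <= r m := r_mono (e0 m) (e0 m.+1) Rk0 Rk c1.
  have hs : s m.+1 <= s m := s_mono mu0 (e0 m) (e0 m.+1) Rk0 Rk Rb0 Rb c2.
  rewrite /E; apply: lerD; apply: ler_wpM2r => //; exact: dotv_ge0.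
have tele : forall m, (m <= t)%N ->
    \sum_(0 <= k < m.+1) D k <= 2^-1 * E 0%N 0%N - 2^-1 * E m m.+1.
  elim=> [|m IH] mt; first by rewrite big_nat1; exact: hD.
  rewrite big_nat_recr //=.
  exact: (tele_arith (IH (ltnW mt)) (hD _ mt) (hmono m mt)).
have Et : 0 <= E t t.+1 by rewrite addr_ge0 // mulr_ge0 ?dotv_ge0 // ?rpos ?spos.
have TL : \sum_(0 <= k < t.+1) D k <= 2^-1 * E 0%N 0%N.
  exact: (tele_end (tele t (leqnn t)) Et).
have hT : 0 < t.+1%:R :> R by rewrite ltr0n.
have J : f xbar_t <= (t.+1%:R)^-1 * \sum_(0 <= k < t.+1) f (xb k).
  have := jensen (w := fun _ : nat => (1 : R)) (m := t) xb cf (fun _ _ => ltr01).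
  rewrite sumr_const_nat subn0.
  under eq_bigr do rewrite scale1r.
  under [X in _ <= _ * X]eq_bigr do rewrite mul1r.
  by [].
have sumD : \sum_(0 <= k < t.+1) D k = rho * \sum_(0 <= k < t.+1) f (xb k)
    - t.+1%:R * (rho * f xs)
    + \sum_(0 <= k < t.+1) (eta k)^-1 * dotv (row_mx (xb k) (lamb k) - ws) G.
  rewrite /D big_split /= sumrB sumr_const_nat subn0 mulr_natl mulr_sumr.
  by [].
have sumP : \sum_(0 <= k < t.+1) (eta k)^-1 * dotv (row_mx (xb k) (lamb k) - ws) G
    = \sum_(0 <= k < t.+1) (eta k)^-1 * dotv (row_mx (xb k) (lamb k)) G - S * dotv ws G.
  under eq_bigr do rewrite dotvBl mulrBr.
  by rewrite sumrB -mulr_suml.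
have dW : dotv (wbar_t - ws) ((eta_avg * rho)^-1 *: G) = (eta_avg * rho)^-1 *
    (S^-1 * \sum_(0 <= k < t.+1) (eta k)^-1 * dotv (row_mx (xb k) (lamb k)) G - dotv ws G).
  rewrite dotvZr dotvBl /wbar_t dotvZl dotv_suml.
  by under eq_bigr do rewrite dotvZl.
have E00 : E 0%N 0%N = (eta 0%N)^-1 * qnorm2 (H0mat Phi mu (x 0%N) (xb 0%N)) (ws - row_mx (x 0%N) (lam 0%N)).
  rewrite /ws !(opp_row_mx, add_row_mx) qnorm_H0 /E /r /s !(dotv_swap (x 0%N)) !(dotv_swap (lam 0%N)).
  by rewrite invfM; ring.
rewrite dW.
apply: (final_arith hS0 hT r0 (e0 0%N) _ J _ E00) => //.
by rewrite -sumP -sumD.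
Qed.
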